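(* If $X$ is a discrete metric space with bounded geometry and finite APC-decomposition complexity, then $X$ has property A.
   Context: A discrete metric space $X$ has bounded geometry if for every $r>0$ there is $N_r$ with $|B(x,r)|<N_r$ for all $x\in X$. Such an $X$ has property A if for each $R,\varepsilon>0$ there is a map $\xi\colon X\to\ell^1(X)$ with $\|\xi_x\|_1=1$ for all $x$, $\|\xi_{x_1}-\xi_{x_2}\|_1\le\varepsilon$ whenever $d(x_1,x_2)\le R$, and some $S>0$ with $\operatorname{supp}\xi_x\subset\bar B(x,S)$ for all $x$. A family $\mathcal{U}$ of metric subspaces of $(X,d)$ is $r$-disjoint if $d(x,y)>r$ whenever $x\in U$, $y\in U'$, $U\neq U'$ in $\mathcal{U}$. For families $\mathcal{X},\mathcal{Y}$ and $R\in\mathbb{R}^{\mathbb{N}}$, $\mathcal{X}\xrightarrow{R}\mathcal{Y}$ means: there is an integer $k$ such that for each $X\in\mathcal{X}$ there are subcollections $\mathcal{U}_1,\dots,\mathcal{U}_k\subseteq\mathcal{Y}$ of subspaces of $X$, each $\mathcal{U}_i$ being $R_i$-disjoint, with $\bigcup_i\mathcal{U}_i$ covering $X$. A family is bounded if the diameters of its members are uniformly bounded. $\mathfrak{C}_0$ is the class of bounded families; for an ordinal $\alpha>0$, $\mathfrak{C}_\alpha$ is the class of families $\mathcal{X}$ such that for every $R\in\mathbb{R}^{\mathbb{N}}$ there exist $\beta<\alpha$ and $\mathcal{Y}\in\mathfrak{C}_\beta$ with $\mathcal{X}\xrightarrow{R}\mathcal{Y}$. A metric space has finite APC-decomposition complexity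 if it is a member of some family belonging to $\mathfrak{C}_\alpha$ for some ordinal $\alpha$. *)

(* Defs.v *)
From HB Require Import structures.
From mathcomp Require Import all_boot all_order all_algebra.
From mathcomp Require Import all_classical all_reals all_analysis.
From Stdlib Require Import List.
Set Implicit Arguments. Unset Strict Implicit. Unset Printing Implicit Defensive.
Import Order.TTheory GRing.Theory Num.Theory.
Local Open Scope classical_set_scope.
Local Open Scope ring_scope.

Section Defs.
Variables (R : realType) (T : choiceType) (d : T -> T -> R).

Definition is_metric : Prop :=
  [/\ (forall x y, 0 <= d x y),
      (forall x y, d x y = 0 <-> x = y),
      (forall x y, d x y = d y x) &
      (forall x y z, d x z <= d x y + d y z)].

Definition discrete_metric : Prop :=
  forall x, exists2 e : R, 0 < e & forall y, d x y < e -> y = x.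

(* bounded geometry: for every r > 0 there is N_r with |B(x,r)| < N_r;
   |B(x,r)| < N is expressed as: B(x,r) is covered by a list of length < N *)
Definition bounded_geometry : Prop :=
  forall r : R, 0 < r -> exists N : nat, forall x : T,
    exists s : list T, (length s < N)%N /\ (forall y, d x y < r -> In y s).

Definition l1norm (f : T -> R) : \bar R := \esum_(y in setT) (`|f y|)%:E.

Definition propertyA : Prop :=
  forall Rr eps : R, 0 < Rr -> 0 < eps ->
  exists xi : T -> T -> R,
    [/\ (forall x, l1norm (xi x) = 1%:E),
        (forall x1 x2, d x1 x2 <= Rr ->
            Order.le (l1norm (fun y => xi x1 y - xi x2 y)) eps%:E) &
        exists2 S : R, 0 < S & forall x y, xi x y != 0 -> d x y <= S].

Definition rdisjoint (r : R) (U : set (set T)) : Prop :=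
  forall A B, U A -> U B -> A <> B -> forall x y, A x -> B y -> r < d x y.

Definition bounded_family (F : set (set T)) : Prop :=
  exists D : R, forall A, F A -> forall x y, A x -> A y -> d x y <= D.

Definition decomposes (Rs : nat -> R) (X Y : set (set T)) : Prop :=
  exists k : nat, forall A, X A ->
    exists U : nat -> set (set T),
      (forall i, (1 <= i <= k)%N ->
         [/\ U i `<=` Y, (forall V, U i V -> V `<=` A) & rdisjoint (Rs i) (U i)])
      /\ A `<=` \bigcup_(i in [set i | (1 <= i <= k)%N]) \bigcup_(V in U i) V.

(* union over all ordinals alpha of the classes C_alpha: the height of a
   derivation tree plays the role of the ordinal alpha *)
Inductive finite_APC : set (set T) -> Prop :=
| APC_bounded F : bounded_family F -> finite_APC F
| APC_step F : (forall Rs : nat -> R, exists Y, finite_APC Y /\ decomposes Rs F Y) ->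
               finite_APC F.

Definition finite_APC_space : Prop := exists F, finite_APC F /\ F setT.

End Defs.

(* Main.v *)
From HB Require Import structures.
Require Import Defs.
From mathcomp Require Import all_boot all_order all_algebra.
From mathcomp Require Import all_classical all_reals all_analysis.
From mathcomp Require Import ring lra.
Set Implicit Arguments. Unset Strict Implicit. Unset Printing Implicit Defensive.
Import Order.TTheory GRing.Theory Num.Theory.
Local Open Scope classical_set_scope.
Local Open Scope ring_scope.

Section Aux.
Variables (R : realType) (T : choiceType).

Lemma sum_supp (f : T -> R) (s t : seq T) : uniq s -> uniq t ->
  (forall y, f y != 0 -> y \in s) -> (forall y, f y != 0 -> y \in t) ->
  \sum_(y <- s) f y = \sum_(y <- t) f y.
Proof.
move=> us ut hs ht.
have E (a b : seq T) : (forall y, f y != 0 -> y \in b) ->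
    \sum_(y <- a) f y = \sum_(y <- [seq y <- a | y \in b]) f y.
  move=> hb; rewrite big_filter [RHS]big_mkcond /=; apply: eq_bigr => y _.
  case: ifP => // yb; have [//|/hb] := eqVneq (f y) 0; by rewrite yb.
rewrite (E s t ht) (E t s hs); apply: perm_big; apply: uniq_perm.
- exact: filter_uniq.
- exact: filter_uniq.
by move=> y; rewrite !mem_filter andbC.
Qed.

Lemma l1norm_seq (f : T -> R) (s : seq T) : uniq s ->
  (forall y, f y != 0 -> y \in s) ->
  l1norm f = (\sum_(y <- s) `|f y|)%:E.
Proof.
move=> us hs; rewrite /l1norm (esumID [set` s]); last by move=> i _; rewrite lee_fin.
rewrite [X in _ + X]esum1 ?adde0; last first.
  move=> y [_ /= ns]; have [->|/hs //] := eqVneq (f y) 0; first by rewrite normr0.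
rewrite setTI esum_fset; [|exact: finite_seq|by move=> i _; rewrite lee_fin].
by rewrite -fsbig_seq // sumEFin.
Qed.

End Aux.
Section UA.
Variables (R : realType) (T : choiceType) (d : T -> T -> R).

Definition UA (F : set (set T)) : Prop :=
 forall Rr eps : R, 0 < Rr -> 0 < eps -> exists2 S : R, 0 < S &
  forall A, F A -> exists (xi : T -> T -> R) (sp : T -> seq T),
   (forall x, A x -> [/\ uniq (sp x), (forall y, xi x y != 0 -> y \in sp x),
        (forall y, 0 <= xi x y), \sum_(y <- sp x) xi x y = 1 &
        (forall y, xi x y != 0 -> d x y <= S)]) /\
   (forall x1 x2, A x1 -> A x2 -> d x1 x2 <= Rr -> forall s, uniq s ->
      {subset sp x1 <= s} -> {subset sp x2 <= s} ->
      \sum_(y <- s) `|xi x1 y - xi x2 y| <= eps).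

Lemma bounded_UA F : bounded_family d F -> UA F.
Proof.
move=> [D hD] Rr eps Rr0 eps0; exists (1 + `|D|); first by rewrite ltr_pwDl.
move=> A FA; have [[b Ab]|nA] := pselect (exists b, A b); last first.
  exists (fun _ _ => 0), (fun _ => [::]); split=> [x Ax|x1 x2 Ax1]; exfalso; apply: nA; by eexists; eauto.
exists (fun _ y => if y == b then 1 else 0), (fun _ => [:: b]); split.
  move=> x Ax; split => //.
  - move=> y; rewrite mem_seq1; case: (y == b) => //; by rewrite eqxx.
  - by move=> y; case: ifP.
  - by rewrite big_seq1 eqxx.
  - move=> y; have [-> _|nb] := eqVneq y b; last by rewrite eqxx. apply: le_trans (hD A FA x b Ax Ab) _.
    by apply: le_trans (ler_norm D) _; rewrite lerDr.
move=> x1 x2 _ _ _ s _ _ _; rewrite big1 ?ltW// => y _; by rewrite subrr normr0.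
Qed.

Lemma UA_propA F : UA F -> F setT -> propertyA d.
Proof.
move=> hF FT Rr eps Rr0 eps0; have [S S0 /(_ _ FT) [xi [sp [h1 h2]]]] := hF Rr eps Rr0 eps0.
exists xi; split.
- move=> x; have [u sx p s1 _] := h1 x I.
  rewrite (l1norm_seq u sx) -s1; congr (_%:E); apply: eq_bigr => y _.
  by rewrite ger0_norm.
- move=> x1 x2 hx; have [u1 sx1 _ _ _] := h1 x1 I; have [u2 sx2 _ _ _] := h1 x2 I.
  rewrite (@l1norm_seq _ _ _ (undup (sp x1 ++ sp x2))) ?undup_uniq //.
    rewrite lee_fin; apply: h2 => //; first exact: undup_uniq.
      by move=> y yi; rewrite mem_undup mem_cat yi.
    by move=> y yi; rewrite mem_undup mem_cat yi orbT.
  move=> y; rewrite mem_undup mem_cat.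
  have [->|/sx1 -> //] := eqVneq (xi x1 y) 0.
  rewrite sub0r oppr_eq0 => /sx2 ->; by rewrite orbT.
- by exists S => // x y; have [_ _ _ _] := h1 x I; apply.
Qed.

End UA.
Section Bump.
Variables (R : realType) (T : choiceType) (d : T -> T -> R).
Hypothesis dm : is_metric d.

Definition bump (W : set T) (s : R) (x : T) : R :=
  sup [set r | r = 0 \/ exists2 v, W v & r = 1 - d x v / s].

Lemma d_ge0 x y : 0 <= d x y. Proof. by case: dm. Qed.
Lemma d_xx x : d x x = 0. Proof. by case: dm => _ h _ _; apply/h. Qed.
Lemma d_sym x y : d x y = d y x. Proof. by case: dm. Qed.
Lemma d_tri x y z : d x z <= d x y + d y z. Proof. by case: dm. Qed.

Section B.
Variables (W : set T) (s : R).
Hypothesis s0 : 0 < s.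

Lemma bump_ub x : has_ubound [set r | r = 0 \/ exists2 v, W v & r = 1 - d x v / s].
Proof.
exists 1 => r [->|[v _ ->]] //; rewrite lerBlDr lerDl divr_ge0 ?d_ge0 ?ltW //.
Qed.

Lemma bump_mem x r : (r = 0 \/ exists2 v, W v & r = 1 - d x v / s) -> r <= bump W s x.
Proof. by move=> h; apply: (ub_le_sup (bump_ub x)). Qed.

Lemma bump_ge0 x : 0 <= bump W s x.
Proof. by apply: bump_mem; left. Qed.

Lemma bump_in x : W x -> 1 <= bump W s x.
Proof. by move=> Wx; apply: bump_mem; right; exists x => //; rewrite d_xx mul0r subr0. Qed.

Lemma bump_lip x y : bump W s x <= bump W s y + d x y / s.
Proof.
apply: ge_sup; first by exists 0; left.
move=> r [->|[v Wv ->]].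
  by rewrite addr_ge0 ?bump_ge0 ?divr_ge0 ?d_ge0 ?ltW.
have h : 1 - d y v / s <= bump W s y by apply: bump_mem; right; exists v.
apply: le_trans (lerD h (lexx (d x y / s))).
have t := d_tri y x v; rewrite (d_sym y x) in t.
have si : 0 < s^-1 by rewrite invr_gt0.
move: (d x v) (d y v) (d x y) (s^-1) t si => a b c u t si; nra.
Qed.

Lemma bump_pos x : 0 < bump W s x -> exists2 v, W v & d x v < s.
Proof.
move=> h; have [//|nv] := pselect (exists2 v, W v & d x v < s).
exfalso; move: h; apply/negP; rewrite -leNgt.
apply: ge_sup; first by exists 0; left.
move=> r [->//|[v Wv ->]]; rewrite subr_le0 ler_pdivlMr // mul1r leNgt.
apply/negP => dv; apply: nv; by exists v.
Qed.

End B.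
End Bump.
Section Gen.
Variables (R : realType) (T : choiceType).

Lemma sum_ne0 k (f : 'I_k -> R) : \sum_(j < k) f j != 0 -> exists j, f j != 0.
Proof.
move=> h; have [//|nh] := pselect (exists j, f j != 0); exfalso; move: h.
rewrite big1 ?eqxx // => j _; have [//|nz] := eqVneq (f j) 0.
by exfalso; apply: nh; exists j.
Qed.

Lemma per_term (s : seq T) (a b del : R) (f g : T -> R) :
  0 <= a -> 0 <= b -> 0 <= del ->
  (a != 0 -> (forall y, 0 <= f y) /\ \sum_(y <- s) f y = 1) ->
  (b != 0 -> (forall y, 0 <= g y) /\ \sum_(y <- s) g y = 1) ->
  (a != 0 -> b != 0 -> \sum_(y <- s) `|f y - g y| <= del) ->
  \sum_(y <- s) `|a * f y - b * g y| <= `|a - b| + b * del.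
Proof.
move=> a0 b0 del0 hf hg hfg.
have [->|an] := eqVneq a 0.
  rewrite sub0r normrN (ger0_norm b0).
  have [->|bn] := eqVneq b 0.
    by rewrite big1 ?mul0r ?addr0 // => y _; rewrite !mul0r subrr normr0.
  have [g0 g1] := hg bn.
  rewrite (eq_bigr (fun y => b * g y)); last first.
    by move=> y _; rewrite mul0r sub0r normrN ger0_norm // mulr_ge0.
  by rewrite -mulr_sumr g1 mulr1 lerDl mulr_ge0.
have [f0 f1] := hf an.
have [->|bn] := eqVneq b 0.
  rewrite subr0 mul0r addr0 (ger0_norm a0) (eq_bigr (fun y => a * f y)).
    by rewrite -mulr_sumr f1 mulr1.
  by move=> y _; rewrite mul0r subr0 ger0_norm // mulr_ge0.
have [g0 g1] := hg bn.
apply: le_trans (_ : \sum_(y <- s) (`|a - b| * f y + b * `|f y - g y|) <= _).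
  apply: ler_sum => y _.
  have -> : a * f y - b * g y = (a - b) * f y + b * (f y - g y) by ring.
  by apply: le_trans (ler_normD _ _) _; rewrite !normrM (ger0_norm (f0 y)) (ger0_norm b0).
rewrite big_split /= -!mulr_sumr f1 mulr1 lerD2l.
by apply: ler_wpM2l => //; apply: hfg.
Qed.

Lemma ratio_bound k (F1 F2 : 'I_k -> R) : (forall j, 0 <= F1 j) -> (forall j, 0 <= F2 j) ->
  1 <= \sum_(j < k) F1 j -> 1 <= \sum_(j < k) F2 j ->
  \sum_(j < k) `|F1 j / \sum_(i < k) F1 i - F2 j / \sum_(i < k) F2 i|
    <= 2 * \sum_(j < k) `|F1 j - F2 j|.
Proof.
move=> h1 h2; set G1 := \sum_(i < k) F1 i; set G2 := \sum_(i < k) F2 i => g1 g2.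
have G1n : G1 != 0 by apply/negP => /eqP e; move: g1; rewrite e; lra.
have G2n : G2 != 0 by apply/negP => /eqP e; move: g2; rewrite e; lra.
have G2p : 0 < G2 by lra.
apply: le_trans (_ : \sum_(j < k) (`|F1 j - F2 j| + F2 j * (`|G2 - G1| / G2)) <= _).
  apply: ler_sum => j _.
  have -> : F1 j / G1 - F2 j / G2 = (F1 j - F2 j) / G1 + F2 j * ((G2 - G1) / G2) / G1.
    by field; apply/andP; split.
  apply: le_trans (ler_normD _ _) _; apply: lerD.
    rewrite normrM normfV (ger0_norm (le_trans ler01 g1)) ler_pdivrMr; last by lra.
    by rewrite ler_peMr // normr_ge0.
  rewrite normrM normfV (ger0_norm (le_trans ler01 g1)) ler_pdivrMr; last by lra.
  rewrite normrM normrM normfV (ger0_norm (h2 j)) (ger0_norm (ltW G2p)) ler_peMr //.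
  by rewrite mulr_ge0 ?divr_ge0 // ltW.
rewrite big_split /= -mulr_suml -/G2 mulrCA divff // mulr1 mulr2n mulrDl mul1r lerD2l.
rewrite /G1 /G2 -sumrB; apply: le_trans (ler_norm_sum _ _ _) _.
by apply: ler_sum => j _; rewrite -normrN opprB.
Qed.

Lemma geom k : \sum_(j < k) (2 ^+ j.+1)^-1 = 1 - (2 ^+ k)^-1 :> R.
Proof.
elim: k => [|k IH]; first by rewrite big_ord0 expr0 invr1 subrr.
rewrite big_ord_recr /= IH exprS invfM; field.
by rewrite expf_neq0 // pnatr_eq0.
Qed.

Lemma geom_le k : \sum_(j < k) (2 ^+ j.+1)^-1 <= 1 :> R.
Proof. by rewrite geom lerBlDr lerDl invr_ge0 exprn_ge0. Qed.

End Gen.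
Lemma step_UA (R : realType) (T : choiceType) (d : T -> T -> R) : is_metric d ->
  forall F, (forall Rs : nat -> R, exists Y, UA d Y /\ decomposes d Rs F Y) -> UA d F.
Proof.
move=> dm F hst Rr eps Rr0 eps0.
pose c := 4 * Rr / eps.
have c0 : 0 < c by rewrite divr_gt0 // mulr_gt0.
pose sc (i : nat) := c * 2 ^+ i.
have sc0 i : 0 < sc i by rewrite mulr_gt0 // exprn_gt0.
pose Rs (i : nat) := 2 * sc i + Rr.
have Rs0 i : 0 < Rs i by rewrite addr_gt0 // mulr_gt0.
have [Y [uY [k hk]]] := hst Rs.
pose P (j : nat) (SS : R) (V : set T) (e : T -> T -> R) (sp : T -> seq T) :=
  (forall x, V x -> [/\ uniq (sp x), (forall y, e x y != 0 -> y \in sp x),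
        (forall y, 0 <= e x y), \sum_(y <- sp x) e x y = 1 &
        (forall y, e x y != 0 -> d x y <= SS)]) /\
   (forall x1 x2, V x1 -> V x2 -> d x1 x2 <= Rs j.+1 -> forall s, uniq s ->
      {subset sp x1 <= s} -> {subset sp x2 <= s} ->
      \sum_(y <- s) `|e x1 y - e x2 y| <= eps / 2).
have hS : forall j : nat, exists SS, 0 < SS /\ forall V, Y V -> exists e sp, P j SS V e sp.
  move=> j; have [SS SS0 h] := uY (Rs j.+1) (eps / 2) (Rs0 _) (divr_gt0 eps0 (ltr0Sn _ 1)).
  by exists SS; split => // V YV; have [e [sp [h1 h2]]] := h V YV; exists e, sp; split.
have [Sf hSf] := choice hS.
have hE : forall jV : nat * set T, exists es : (T -> T -> R) * (T -> seq T),
    Y jV.2 -> P jV.1 (Sf jV.1) jV.2 es.1 es.2.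
  move=> [j V]; have [YV|nYV] := pselect (Y V).
    by have [e [sp h]] := (hSf j).2 V YV; exists (e, sp).
  by exists ((fun _ _ => 0), (fun _ => [::])).
have [es hes] := choice hE.
pose e j V := (es (j, V)).1. pose spf j V := (es (j, V)).2.
have Sf0 j : 0 <= Sf j by apply: ltW; case: (hSf j).
have sum0 : 0 <= \sum_(j < k) (sc j.+1 + Sf j).
  by apply: sumr_ge0 => j _; rewrite addr_ge0 // ltW.
exists (1 + \sum_(j < k) (sc j.+1 + Sf j)); first by apply: (lt_le_trans ltr01); rewrite lerDl.
move=> A FA; have [U [hU cov]] := hk A FA.
pose W j := \bigcup_(V in U j.+1) V.
pose Fb (j : nat) x := bump d (W j) (sc j.+1) x.
pose G x := \sum_(j < k) Fb j x.
pose p (j : nat) x := Fb j x / G x.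
have hpi : forall jx : nat * T, exists v, (exists2 v', W jx.1 v' & d jx.2 v' < sc jx.1.+1) ->
    W jx.1 v /\ d jx.2 v < sc jx.1.+1.
  move=> [j x]; have [[v Wv dv]|nv] := pselect (exists2 v', W j v' & d x v' < sc j.+1).
    by exists v.
  by exists x => h; exfalso; apply: nv.
have [pi hpi'] := choice hpi.
have hV : forall jv : nat * T, exists V, W jv.1 jv.2 -> U jv.1.+1 V /\ V jv.2.
  move=> [j v]; have [[V UV Vv]|nv] := pselect (W j v).
    by exists V.
  by exists set0.
have [Vf hVf] := choice hV.
pose px j x := pi (j, x). pose Vx j x := Vf (j, px j x).
pose xi x y := \sum_(j < k) p j x * e j (Vx j x) (px j x) y.
pose sp x := undup (flatten (map (fun j : 'I_k => spf j (Vx j x) (px j x)) (enum 'I_k))).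
have Fb0 j x : 0 <= Fb j x by apply: bump_ge0.
have G0 x : 0 <= G x by apply: sumr_ge0 => j _.
have Gge1 x : A x -> 1 <= G x.
  move=> Ax; have [i /= /andP[i1 ik] [V UV Vx']] := cov x Ax.
  case: i i1 ik UV => // j _ jk UV.
  have h1 : 1 <= Fb j x by apply: bump_in => //; exists V.
  apply: le_trans h1 _; rewrite /G (bigD1 (Ordinal jk)) //= lerDl.
  by apply: sumr_ge0 => i _.
have valid j x : (j < k)%N -> 0 < Fb j x ->
    [/\ Y (Vx j x), Vx j x (px j x), U j.+1 (Vx j x) & d x (px j x) < sc j.+1].
  move=> jk pos; have [v Wv dv] := bump_pos (sc0 j.+1) pos.
  have [Wp dp] := hpi' (j, x) (ex_intro2 _ _ v Wv dv).
  have [UV Vp] := hVf (j, px j x) Wp.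
  have [sub _ _] := hU j.+1 jk.
  by split => //; apply: sub.
have p_ge0 j x : 0 <= p j x by apply: divr_ge0.
have p_ne0 j x : p j x != 0 -> 0 < Fb j x.
  move=> pn; rewrite lt_def Fb0 andbT; apply: contraNneq pn => e0; by rewrite /p e0 mul0r.
have insp x (j : 'I_k) : {subset spf j (Vx j x) (px j x) <= sp x}.
  move=> y yi; rewrite mem_undup; apply/flattenP.
  by exists (spf j (Vx j x) (px j x)) => //; apply: (map_f (fun j : 'I_k => spf j (Vx j x) (px j x))); rewrite mem_enum.
exists xi, sp; split.
  move=> x Ax; split.
  - exact: undup_uniq.
  - move=> y /sum_ne0 [j]; rewrite mulf_eq0 negb_or => /andP [pn en].
    have [YV VxV _ _] := valid j x (ltn_ord j) (p_ne0 _ _ pn).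
    have [_ sx _ _ _] := (hes (nat_of_ord j, Vx j x) YV).1 (px j x) VxV.
    by apply: insp; apply: sx.
  - move=> y; apply: sumr_ge0 => j _; have [->|pn] := eqVneq (p j x) 0; first by rewrite mul0r.
    have [YV VxV _ _] := valid j x (ltn_ord j) (p_ne0 _ _ pn).
    have [_ _ e0 _ _] := (hes (nat_of_ord j, Vx j x) YV).1 (px j x) VxV.
    exact: mulr_ge0 (p_ge0 _ _) (e0 y).
  - rewrite exchange_big /= (_ : \sum_(j < k) _ = \sum_(j < k) p j x).
      by rewrite /p -mulr_suml divff //; apply/negP => /eqP e0; have := Gge1 x Ax; rewrite /G e0; lra.
    apply: eq_bigr => j _; rewrite -mulr_sumr; have [->|pn] := eqVneq (p j x) 0; first by rewrite mul0r.
    have [YV VxV _ _] := valid j x (ltn_ord j) (p_ne0 _ _ pn).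
    have [u sx _ s1 _] := (hes (nat_of_ord j, Vx j x) YV).1 (px j x) VxV.
    rewrite (@sum_supp _ _ _ (sp x) (spf j (Vx j x) (px j x))) ?undup_uniq //; first by rewrite s1 mulr1.
    by move=> y /sx; apply: insp.
  - move=> y /sum_ne0 [j]; rewrite mulf_eq0 negb_or => /andP [pn en].
    have [YV VxV _ dl] := valid j x (ltn_ord j) (p_ne0 _ _ pn).
    have [_ _ _ _ hd] := (hes (nat_of_ord j, Vx j x) YV).1 (px j x) VxV.
    have := hd y en; have := d_tri dm x (px j x) y.
    have r0 : 0 <= \sum_(i < k | i != j) (sc i.+1 + Sf i).
      by apply: sumr_ge0 => i _; rewrite addr_ge0 // ltW.
    rewrite (bigD1 j) //=; rewrite -/(Sf j) in r0 *; move: (Sf j) (sc j.+1) dl r0 => a b dl r0.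
    rewrite /e; lra.
move=> x1 x2 Ax1 Ax2 dx s us s1 s2.
apply: le_trans (_ : \sum_(y <- s) \sum_(j < k) `|p j x1 * e j (Vx j x1) (px j x1) y
    - p j x2 * e j (Vx j x2) (px j x2) y| <= _).
  by apply: ler_sum => y _; rewrite /xi -sumrB; apply: ler_norm_sum.
rewrite exchange_big /=.
apply: le_trans (_ : \sum_(j < k) (`|p j x1 - p j x2| + p j x2 * (eps / 2)) <= _).
  apply: ler_sum => j _; apply: per_term => //.
  - by rewrite divr_ge0 // ltW.
  - move=> pn; have [YV VxV _ _] := valid j x1 (ltn_ord j) (p_ne0 _ _ pn).
    have [u sx e0 s1' _] := (hes (nat_of_ord j, Vx j x1) YV).1 (px j x1) VxV.
    split => //; rewrite (@sum_supp _ _ _ s (spf j (Vx j x1) (px j x1))) //.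
    by move=> y /sx /insp /s1.
  - move=> pn; have [YV VxV _ _] := valid j x2 (ltn_ord j) (p_ne0 _ _ pn).
    have [u sx e0 s1' _] := (hes (nat_of_ord j, Vx j x2) YV).1 (px j x2) VxV.
    split => //; rewrite (@sum_supp _ _ _ s (spf j (Vx j x2) (px j x2))) //.
    by move=> y /sx /insp /s2.
  move=> pn1 pn2.
  have [Y1 V1 U1 d1] := valid j x1 (ltn_ord j) (p_ne0 _ _ pn1).
  have [Y2 V2 U2 d2] := valid j x2 (ltn_ord j) (p_ne0 _ _ pn2).
  have dpp : d (px j x1) (px j x2) <= Rs j.+1.
    have t1 := d_tri dm (px j x1) x1 (px j x2).
    have t2 := d_tri dm x1 x2 (px j x2).
    rewrite (d_sym dm (px j x1) x1) in t1.
    rewrite /Rs; move: (d (px j x1) (px j x2)) (d x1 (px j x1)) (d x1 (px j x2))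
      (d x2 (px j x2)) (d x1 x2) (sc j.+1) t1 t2 d1 d2 dx => a b c' f g h t1 t2 d1 d2 dx.
    lra.
  have eqV : Vx j x1 = Vx j x2.
    have [//|ne] := pselect (Vx j x1 = Vx j x2).
    have [_ _ dis] := hU j.+1 (ltn_ord j).
    have := dis _ _ U1 U2 ne _ _ V1 V2; rewrite ltNge dpp //.
  rewrite -eqV in V2 *.
  have [u1 sx1 _ _ _] := (hes (nat_of_ord j, Vx j x1) Y1).1 (px j x1) V1.
  have [u2 sx2 _ _ _] := (hes (nat_of_ord j, Vx j x1) Y1).1 (px j x2) V2.
  apply: (hes (nat_of_ord j, Vx j x1) Y1).2 => //.
  - by move=> y /insp /s1.
  - by move=> y yi; rewrite eqV in yi; apply/s2; apply: (insp x2 j).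
have sp1 : \sum_(j < k) p j x2 = 1.
  by rewrite /p -mulr_suml divff //; apply/negP => /eqP e0; have := Gge1 x2 Ax2; rewrite /G e0; lra.
rewrite big_split /= -mulr_suml sp1 mul1r.
suff : \sum_(j < k) `|p j x1 - p j x2| <= eps / 2 by lra.
have hr : \sum_(j < k) `|p j x1 - p j x2| <= 2 * \sum_(j < k) `|Fb j x1 - Fb j x2|.
  exact: (@ratio_bound R k (fun j : 'I_k => Fb j x1) (fun j : 'I_k => Fb j x2) (fun j => Fb0 _ _) (fun j => Fb0 _ _) (Gge1 _ Ax1) (Gge1 _ Ax2)).
apply: le_trans hr _.
have hF (j : 'I_k) : `|Fb j x1 - Fb j x2| <= (Rr / c) * (2 ^+ j.+1)^-1.
  have l1 := bump_lip dm (W j) (sc0 j.+1) x1 x2.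
  have l2 := bump_lip dm (W j) (sc0 j.+1) x2 x1.
  rewrite (d_sym dm x2 x1) in l2.
  have hd : d x1 x2 / sc j.+1 <= (Rr / c) * (2 ^+ j.+1)^-1.
    rewrite /sc invfM mulrA ler_wpM2r ?invr_ge0 ?exprn_ge0 //.
    by rewrite ler_wpM2r // invr_ge0 ltW.
  rewrite ler_norml; apply/andP; split; rewrite /Fb.
    move: hd l1 l2; move: (d x1 x2 / sc j.+1) (bump d (W j) (sc j.+1) x1) (bump d (W j) (sc j.+1) x2) => a b f; lra.
  move: hd l1 l2; move: (d x1 x2 / sc j.+1) (bump d (W j) (sc j.+1) x1) (bump d (W j) (sc j.+1) x2) => a b f; lra.
apply: le_trans (_ : 2 * \sum_(j < k) ((Rr / c) * (2 ^+ j.+1)^-1) <= _).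
  by rewrite ler_wpM2l // ler_sum.
rewrite -mulr_sumr.
have rc : Rr / c = eps / 4.
  rewrite /c; field; apply/andP; split; apply/negP => /eqP e0; move: Rr0 eps0; rewrite e0; lra.
rewrite rc; have := geom_le R k; have e4 : 0 <= eps / 4 by rewrite divr_ge0 // ltW.
move: (\sum_(j < k) (2 ^+ j.+1)^-1 : R) => g hg.
have : eps / 4 * g <= eps / 4 by rewrite ler_piMr.
lra.
Qed.
Lemma APC_UA (R : realType) (T : choiceType) (d : T -> T -> R) : is_metric d ->
  (forall F, (forall Rs : nat -> R, exists Y, UA d Y /\ decomposes d Rs F Y) -> UA d F) ->
  forall F, finite_APC d F -> UA d F.
Proof.
move=> dm step; fix IH 2 => F H; case: H => [G hb|G h].
  exact: bounded_UA.
apply: step => Rs; case: (h Rs) => Y [HY Hd]; exists Y; split => //.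
exact: IH.
Qed.

Theorem theorem5p8 (R : realType) (T : choiceType) (d : T -> T -> R) :
  is_metric d -> discrete_metric d -> bounded_geometry d ->
  finite_APC_space d -> propertyA d.
Proof.
move=> dm _ _ [F [HF FT]]; apply: (@UA_propA _ _ _ F) => //.
apply: APC_UA HF => //; exact: step_UA.
Qed.
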